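(* Let $(G,\lambda)$ and $(G',\lambda')$ be finite abelian $2$-groups with nonsingular symmetric linking pairings and $k\ge1$. If the layer forms $b_k$ of both are alternating, then the layer form $b_k$ of the orthogonal sum $(G\oplus G',\lambda\oplus\lambda')$ is alternating and $u_k(G\oplus G',\lambda\oplus\lambda')\equiv u_k(G,\lambda)+u_k(G',\lambda')\pmod 8$.
   Context: $G_k=\{x\in G:2^kx=0\}$, $P_k(G)=G_k/(G_{k-1}+2G_{k+1})$ with $\mathbb F_2$-form $b_k(\bar x,\bar y)=2^k\lambda(x,y)\bmod 2$. When $b_k$ is alternating, $q_k:H_k(G)=G/G_k\to\mathbb Q/\mathbb Z$, $q_k(\bar x)=2^{k-1}\lambda(x,x)$, is well defined, $\gamma_k=|H_k(G)|^{-1/2}\sum_{\bar x\in H_k(G)}\exp(2\pi iq_k(\bar x))$ is an eighth root of unity, and $u_k\in\mathbb Z/8$ is defined by $\gamma_k=\exp(\pi i u_k/4)$. *)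

(* Defs.v *)
From HB Require Import structures.
From mathcomp Require Import all_boot all_order all_algebra.
From mathcomp Require Import reals trigo.
From mathcomp Require Import complex.

Set Implicit Arguments.
Unset Strict Implicit.
Unset Printing Implicit Defensive.

Import Order.TTheory GRing.Theory Num.Theory.
Local Open Scope ring_scope.

(* Q/Z-valued pairings are represented by rational-valued lifts: a map     *)
(* lam : G -> G -> rat, where only lam x y modulo Z is meaningful.         *)
(* All definitions below depend only on lam modulo Z.                     *)

Definition intQ (q : rat) : bool := q \is a Num.int.

Definition is_2group (G : finZmodType) : Prop :=
  forall x : G, exists n : nat, x *+ (2 ^ n) = 0.

Definition linking_pairing (G : finZmodType) (lam : G -> G -> rat) : Prop :=
  [/\
      forall x y z : G, intQ (lam (x + y) z - lam x z - lam y z),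
      forall x y : G, intQ (lam x y - lam y x)
    & (* nonsingular: the adjoint G -> Hom(G, Q/Z) is injective
         (hence bijective, G being finite) *)
      forall x : G, (forall y : G, intQ (lam x y)) -> x = 0].

Definition Gk (G : finZmodType) (k : nat) : {set G} :=
  [set x : G | x *+ (2 ^ k) == 0].

(* b_k on representatives: b_k(x,y) = 2^k lam(x,y)  (an integer for x,y in G_k),
   to be read mod 2 *)
Definition bk (G : finZmodType) (lam : G -> G -> rat) (k : nat) (x y : G) : rat :=
  (2 ^ k)%:R * lam x y.

(* b_k is alternating on P_k(G) = G_k/(G_{k-1}+2G_{k+1}):
   b_k(xbar,xbar) = 0 in F_2 for every xbar, i.e. 2^k lam(x,x) is even
   for every x in G_k *)
Definition bk_alternating (G : finZmodType) (lam : G -> G -> rat) (k : nat) : Prop :=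
  forall x : G, x \in Gk G k -> intQ (bk lam k x x / 2).

(* H_k(G) = G / G_k, realised as the set of cosets x + G_k *)
Definition Hk (G : finZmodType) (k : nat) : {set {set G}} :=
  [set [set x + y | y in Gk G k] | x : G].

Definition qk (G : finZmodType) (lam : G -> G -> rat) (k : nat) (C : {set G}) : rat :=
  let x := odflt 0 [pick x in C] in (2 ^ k.-1)%:R * lam x x.

Definition expi2pi (R : realType) (q : rat) : R[i] :=
  Complex (cos (2 * pi * ratr q)) (sin (2 * pi * ratr q)).

Definition gammak (R : realType) (G : finZmodType) (lam : G -> G -> rat) (k : nat)
  : R[i] :=
  (((Num.sqrt (#|Hk G k|%:R : R))^-1)%:C)%C *
    \sum_(C in Hk G k) expi2pi R (qk lam k C).

Definition uk (R : realType) (G : finZmodType) (lam : G -> G -> rat) (k : nat)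
  : 'Z_8 :=
  odflt 0 [pick u : 'Z_8 | gammak R lam k == expi2pi R ((val u)%:R / 8)].

Definition prodZ (G G' : finZmodType) := (G * G')%type.
HB.instance Definition _ (G G' : finZmodType) := Finite.on (prodZ G G').
HB.instance Definition _ (G G' : finZmodType) := GRing.Zmodule.on (prodZ G G').

Definition osum (G G' : finZmodType) (lam : G -> G -> rat) (lam' : G' -> G' -> rat)
  : prodZ G G' -> prodZ G G' -> rat :=
  fun x y => lam x.1 y.1 + lam' x.2 y.2.

(* Main.v *)
Require Import Defs.
From HB Require Import structures.
From mathcomp Require Import all_boot all_order all_algebra.
From mathcomp Require Import reals trigo.
From mathcomp Require Import complex.
From mathcomp Require Import ring lra zify.
Import Order.TTheory GRing.Theory Num.Theory.
Local Open Scope ring_scope.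

Definition eqZ (a b : rat) := intQ (a - b).

Lemma intQ_int (n : int) : intQ n%:~R. Proof. exact: intr_int. Qed.
Lemma intQ_nat (n : nat) : intQ n%:R. Proof. by rewrite pmulrn intQ_int. Qed.
Lemma intQD a b : intQ a -> intQ b -> intQ (a + b). Proof. rewrite /intQ; exact: rpredD. Qed.
Lemma intQN a : intQ a -> intQ (- a). Proof. by rewrite /intQ rpredN. Qed.
Lemma intQB a b : intQ a -> intQ b -> intQ (a - b). Proof. rewrite /intQ; exact: rpredB. Qed.
Lemma intQM a b : intQ a -> intQ b -> intQ (a * b). Proof. rewrite /intQ; exact: rpredM. Qed.
Lemma intQ0 : intQ 0. Proof. rewrite /intQ; exact: rpred0. Qed.
Arguments intQD {a b}. Arguments intQB {a b}. Arguments intQM {a b}. Arguments intQN {a}.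

Lemma eqZ_refl a : eqZ a a. Proof. by rewrite /eqZ subrr intQ0. Qed.
Lemma eqZ_sym a b : eqZ a b -> eqZ b a.
Proof. by move=> h; rewrite /eqZ -opprB; apply: intQN. Qed.
Lemma eqZ_trans a b c : eqZ a b -> eqZ b c -> eqZ a c.
Proof. move=> h1 h2; have := intQD h1 h2; by rewrite addrA subrK. Qed.
Lemma eqZ_add a b c d : eqZ a b -> eqZ c d -> eqZ (a + c) (b + d).
Proof. move=> h1 h2; have := intQD h1 h2; rewrite /eqZ; congr intQ; ring. Qed.
Lemma eqZ_opp a b : eqZ a b -> eqZ (- a) (- b).
Proof. move=> h1; have := intQN h1; rewrite /eqZ; congr intQ; ring. Qed.
Lemma eqZ_sub a b c d : eqZ a b -> eqZ c d -> eqZ (a - c) (b - d).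
Proof. by move=> h1 h2; apply: eqZ_add => //; apply: eqZ_opp. Qed.
Lemma eqZ_mulz (n : int) a b : eqZ a b -> eqZ (n%:~R * a) (n%:~R * b).
Proof. move=> h1; have := intQM (intQ_int n) h1; rewrite /eqZ; congr intQ; ring. Qed.
Lemma eqZ_muln (n : nat) a b : eqZ a b -> eqZ (n%:R * a) (n%:R * b).
Proof. by rewrite pmulrn; apply: eqZ_mulz. Qed.
Lemma eqZ_eq a b : a = b -> eqZ a b. Proof. by move=> ->; apply: eqZ_refl. Qed.
Lemma eqZ_int0 a : intQ a -> eqZ a 0. Proof. by rewrite /eqZ subr0. Qed.
Lemma eqZ_0int a : eqZ a 0 -> intQ a. Proof. by rewrite /eqZ subr0. Qed.
Lemma eqZ_sum (I : finType) (F H : I -> rat) :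
  (forall i, eqZ (F i) (H i)) -> eqZ (\sum_i F i) (\sum_i H i).
Proof.
move=> h; rewrite /eqZ -sumrB; apply: rpred_sum => i _; exact: h.
Qed.

Arguments eqZ_sym {a b}. Arguments eqZ_trans {a b c}. Arguments eqZ_add {a b c d}.
Arguments eqZ_opp {a b}. Arguments eqZ_sub {a b c d}. Arguments eqZ_mulz n {a b}.
Arguments eqZ_muln n {a b}. Arguments eqZ_eq {a b}. Arguments eqZ_int0 {a}. Arguments eqZ_0int {a}.

Section Bil.
Context {G : finZmodType} {lam : G -> G -> rat}.
Hypothesis hlam : linking_pairing lam.

Lemma lamD x y z : eqZ (lam (x + y) z) (lam x z + lam y z).
Proof. case: hlam => h _ _; move: (h x y z); rewrite /eqZ; congr intQ; ring. Qed.
Lemma lamC x y : eqZ (lam x y) (lam y x).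
Proof. by case: hlam => _ h _; apply: h. Qed.
Lemma lam0 z : eqZ (lam 0 z) 0.
Proof.
have := lamD 0 0 z; rewrite addr0 /eqZ => h.
have := intQN h; congr intQ; ring.
Qed.
Lemma lamN x z : eqZ (lam (- x) z) (- lam x z).
Proof.
have h1 := lamD x (- x) z; rewrite subrr in h1.
have h2 := eqZ_trans (eqZ_sym h1) (lam0 z).
move: h2; rewrite /eqZ; congr intQ; ring.
Qed.
Lemma lamMn x z (n : nat) : eqZ (lam (x *+ n) z) (n%:R * lam x z).
Proof.
elim: n => [|n IH]; first by rewrite mulr0n mul0r; apply: lam0.
rewrite mulrS; apply: eqZ_trans (lamD _ _ _) _.
apply: eqZ_trans (eqZ_add (eqZ_refl _) IH) _.
by apply: eqZ_eq; rewrite -addn1 natrD; ring.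
Qed.
Lemma lamMz x z (n : int) : eqZ (lam (x *~ n) z) (n%:~R * lam x z).
Proof.
case: n => n; first by rewrite -pmulrn; apply: lamMn.
rewrite NegzE mulrNz; apply: eqZ_trans (lamN _ _) _.
rewrite mulNr; apply: eqZ_opp.
by rewrite -!pmulrn; apply: lamMn.
Qed.
Lemma lamD2 x y z : eqZ (lam x (y + z)) (lam x y + lam x z).
Proof.
apply: eqZ_trans (lamC _ _) _; apply: eqZ_trans (lamD _ _ _) _.
by apply: eqZ_add; apply: lamC.
Qed.
Lemma lamMz2 x z (n : int) : eqZ (lam x (z *~ n)) (n%:~R * lam x z).
Proof.
apply: eqZ_trans (lamC _ _) _; apply: eqZ_trans (lamMz _ _ _) _.
by apply: eqZ_mulz; apply: lamC.
Qed.
Lemma lam02 z : eqZ (lam z 0) 0.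
Proof. exact: eqZ_trans (lamC _ _) (lam0 _). Qed.
End Bil.
Section Expo.
Variable R : realType.
Notation e := (expi2pi R).
Lemma cmulE (a b c d : R) : ((Complex a b) * (Complex c d) : R[i]) = Complex (a*c - b*d) (a*d + b*c).
Proof. by []. Qed.
Lemma e_add (a b : rat) : e (a + b) = e a * e b.
Proof.
rewrite /expi2pi rmorphD mulrDr cosD sinD cmulE; congr Complex; ring.
Qed.
Lemma c1E : (1 : R[i]) = Complex 1 0. Proof. by []. Qed.
Lemma e_nat (n : nat) : e n%:R = 1.
Proof.
rewrite /expi2pi ratr_nat c1E.
have -> : 2 * pi * n%:R = 0 + (pi : R) *+ 2 *+ n by rewrite add0r mulr_natr mulr_natl.
by rewrite (periodicn (@cosD2pi R)) (periodicn (@sinD2pi R)) cos0 sin0.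
Qed.
Lemma e_int (n : int) : e n%:~R = 1.
Proof.
case: n => n; first by rewrite -pmulrn e_nat.
rewrite NegzE mulrNz.
have := e_add (- (n.+1%:~R)) (n.+1%:~R).
by rewrite addNr -pmulrn e_nat mulr1 -[0]/(0%:R) e_nat.
Qed.
Lemma e_eqZ (a b : rat) : intQ (a - b) -> e a = e b.
Proof.
move=> /intrP [n hn]. have -> : a = b + n%:~R by rewrite -hn addrC subrK.
by rewrite e_add e_int mulr1.
Qed.
Lemma e_eq1 (q : rat) : e q = 1 -> intQ q.
Proof.
move=> h.
set f := Num.floor q. set r := q - f%:~R.
have hr : e r = 1 by rewrite -h; apply: e_eqZ; rewrite /r addrAC subrr add0r /intQ rpredN; exact: intr_int. 
have [r0 r1] : 0 <= r /\ r < 1.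
  have /andP[h1 h2] := floor_itv q. rewrite /r -/f. split; first by rewrite subr_ge0.
  by move: h2; rewrite ltrBlDl intrD.
have : r = 0.
  apply/eqP; rewrite eq_le r0 andbT leNgt; apply/negP => rpos.
  move: hr; rewrite /expi2pi c1E => -[hc _].
  set x := 2 * pi * ratr r in hc.
  have xpos : 0 < x by rewrite /x mulr_gt0 ?ltr0q // mulr_gt0 ?pi_gt0.
  have xlt : x < pi *+ 2.
    have hr1 : ratr r < 1 :> R by rewrite -(rmorph1 (@ratr R)) ltr_rat.
    have := @pi_gt0 R. rewrite /x mulr2n. nra.
  have cpi : (0 : R) \in `[0, pi] by rewrite in_itv /= lexx pi_ge0.
  case: (lerP x pi) => xpi.
    have xin : x \in `[0, pi] by rewrite in_itv /= xpi ltW.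
    have := ltr_cos cpi xin; rewrite xpos cos0 hc ltxx. by [].
  have yin : pi *+ 2 - x \in `[0, pi].
    by rewrite in_itv /=; apply/andP; split; move: xlt xpi; rewrite mulr2n => ??; lra.
  have := ltr_cos cpi yin; rewrite cos0 cosB cos2pi sin2pi hc mul0r addr0 mul1r ltxx.
  by move: xlt; rewrite subr_gt0 => ->.
move=> r00. have -> : q = f%:~R + r by rewrite /r addrC subrK.
by rewrite r00 addr0; exact: intr_int.
Qed.
End Expo.
Section QB.
Variable G : finZmodType.
Variable lam : G -> G -> rat.
Variable k : nat.
Hypothesis hlam : linking_pairing lam.
Hypothesis hk : (1 <= k)%N.
Hypothesis halt : bk_alternating lam k.

Definition KK : rat := (2 ^ k.-1)%:R.
Definition Q (x : G) : rat := KK * lam x x.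
Definition B (x y : G) : rat := (2 ^ k)%:R * lam x y.

Lemma two_k : (2 ^ k)%:R = 2 * KK :> rat.
Proof. by rewrite /KK -natrM -expnS prednK. Qed.

Lemma QD x y : eqZ (Q (x + y)) (Q x + Q y + B x y).
Proof.
have h1 : eqZ (lam (x + y) (x + y)) (lam x x + lam y y + 2 * lam x y).
  apply: eqZ_trans (lamD hlam _ _ _) _.
  apply: eqZ_trans (eqZ_add (lamD2 hlam _ _ _) (lamD2 hlam _ _ _)) _.
  apply: eqZ_trans (eqZ_add (eqZ_refl _) (eqZ_add (lamC hlam y x) (eqZ_refl _))) _.
  by apply: eqZ_eq; ring.
apply: eqZ_trans (eqZ_muln _ h1) _.
by apply: eqZ_eq; rewrite /Q /B two_k -/KK; ring.
Qed.

Lemma QMz x (c : int) : eqZ (Q (x *~ c)) ((c%:~R) ^+ 2 * Q x).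
Proof.
have h1 : eqZ (lam (x *~ c) (x *~ c)) ((c%:~R) ^+ 2 * lam x x).
  apply: eqZ_trans (lamMz hlam _ _ _) _.
  apply: eqZ_trans (eqZ_mulz c (lamMz2 hlam _ _ _)) _.
  by apply: eqZ_eq; ring.
apply: eqZ_trans (eqZ_muln _ h1) _.
by apply: eqZ_eq; rewrite /Q; ring.
Qed.

Lemma BMz1 x y (c : int) : eqZ (B (x *~ c) y) (c%:~R * B x y).
Proof.
apply: eqZ_trans (eqZ_muln _ (lamMz hlam _ _ _)) _.
by apply: eqZ_eq; rewrite /B; ring.
Qed.
Lemma BMz2 x y (c : int) : eqZ (B x (y *~ c)) (c%:~R * B x y).
Proof.
apply: eqZ_trans (eqZ_muln _ (lamMz2 hlam _ _ _)) _.
by apply: eqZ_eq; rewrite /B; ring.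
Qed.
Lemma BD1 x y z : eqZ (B (x + y) z) (B x z + B y z).
Proof.
apply: eqZ_trans (eqZ_muln _ (lamD hlam _ _ _)) _.
by apply: eqZ_eq; rewrite /B; ring.
Qed.
Lemma BD2 x y z : eqZ (B x (y + z)) (B x y + B x z).
Proof.
apply: eqZ_trans (eqZ_muln _ (lamD2 hlam _ _ _)) _.
by apply: eqZ_eq; rewrite /B; ring.
Qed.
Lemma BC x y : eqZ (B x y) (B y x).
Proof.
apply: eqZ_trans (eqZ_muln _ (lamC hlam _ _)) _.
by apply: eqZ_eq.
Qed.

Lemma inGk x : (x \in Gk G k) = (x *+ 2 ^ k == 0).
Proof. by rewrite inE. Qed.

Lemma Q_Gk x : x \in Gk G k -> intQ (Q x).
Proof.
move=> /halt; rewrite /bk two_k /Q; congr intQ; field; done.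
Qed.

Lemma B_Gk x y : y \in Gk G k -> intQ (B x y).
Proof.
rewrite inGk => /eqP hy.
have := lamMz2 hlam x y (2 ^ k)%N.
rewrite -pmulrn hy => h.
have := eqZ_trans (eqZ_sym h) (lam02 hlam x).
by rewrite /eqZ subr0 /B pmulrn.
Qed.

Lemma Q_coset x y : y \in Gk G k -> eqZ (Q (x + y)) (Q x).
Proof.
move=> hy; apply: eqZ_trans (QD _ _) _.
rewrite -addrA -[X in eqZ _ X]addr0; apply: eqZ_add; first exact: eqZ_refl.
by apply: eqZ_int0; apply: intQD; [apply: Q_Gk | apply: B_Gk].
Qed.

Lemma nonsing_B z : z \notin Gk G k -> exists y, ~~ intQ (B y z).
Proof.
rewrite inGk => hz.
have : ~~ [forall y, intQ (lam (z *+ 2 ^ k) y)].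
  apply/negP => /forallP h; case: hlam => _ _ hn.
  by move: hz; rewrite (hn _ h) eqxx.
move=> /forallPn [y hy]; exists y; apply/negP => hB.
move: hy; apply/negP/negPn.
have h1 := eqZ_trans (BC y z) (eqZ_refl _).
have h2 : eqZ (lam (z *+ 2 ^ k) y) (B z y).
  rewrite pmulrn; apply: eqZ_trans (lamMz hlam _ _ _) _.
  by apply: eqZ_eq; rewrite /B pmulrn.
have := eqZ_trans h2 (eqZ_trans (eqZ_sym h1) (eqZ_int0 hB)).
by rewrite /eqZ subr0.
Qed.
End QB.
Arguments KK : clear implicits.
Arguments Q {G} lam k x.
Arguments B {G} lam k x y.
Arguments QD {G lam k}. Arguments QMz {G lam k}. Arguments BMz1 {G lam k}.
Arguments BMz2 {G lam k}. Arguments BD1 {G lam k}. Arguments BD2 {G lam k}.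
Arguments BC {G lam k}. Arguments Q_Gk {G lam k}. Arguments B_Gk {G lam k}.
Arguments Q_coset {G lam k}. Arguments nonsing_B {G lam k}. Arguments two_k {k}.
Arguments inGk {G k}.
Section Cosets.
Variable G : finZmodType.
Variable k : nat.

Definition cos (x : G) : {set G} := [set x + y | y in Gk G k].

Lemma Gk0 : (0 : G) \in Gk G k. Proof. by rewrite inE mul0rn. Qed.
Lemma GkB a b : a \in Gk G k -> b \in Gk G k -> a - b \in Gk G k.
Proof. rewrite !inE mulrnBl => /eqP -> /eqP ->; by rewrite subrr. Qed.

Lemma in_cos u x : (u \in cos x) = (u - x \in Gk G k).
Proof.
apply/imsetP/idP => [[y hy ->]|h]; first by rewrite addrC addKr.
by exists (u - x) => //; rewrite addrC subrK.
Qed.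

Lemma cos_eq x x0 : (cos x == cos x0) = (x \in cos x0).
Proof.
apply/eqP/idP => [<-|h]; first by rewrite in_cos subrr Gk0.
apply/setP => u; rewrite !in_cos; rewrite in_cos in h.
apply/idP/idP => hu.
  have -> : u - x0 = (u - x) - - (x - x0) by rewrite opprK addrA subrK.
  by apply: GkB => //; rewrite -sub0r; apply: GkB => //; exact: Gk0.
have -> : u - x = (u - x0) - (x - x0) by rewrite opprB addrA subrK.
exact: GkB.
Qed.

Lemma card_cos x : #|cos x| = #|Gk G k|.
Proof. by rewrite card_imset //; apply: addrI. Qed.

Lemma Hk_cos : Hk G k = [set cos x | x in [set: G]].
Proof. by apply/setP => C; rewrite /Hk; apply/imsetP/imsetP => [][x _ ->]; exists x. Qed.

Lemma partition_sum (L : nmodType) (W : {set G} -> L) :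
  \sum_(x : G) W (cos x) = (\sum_(C in Hk G k) W C) *+ #|Gk G k|.
Proof.
rewrite (eq_bigl (fun x => x \in [set: G])); last by move=> x; rewrite in_setT.
rewrite (partition_big_imset cos) -Hk_cos -sumrMnl.
apply: eq_bigr => C /imsetP [x0 _ ->].
rewrite (eq_bigl (fun x => x \in cos x0)); last first.
  by move=> x; rewrite in_setT cos_eq.
rewrite -(card_cos x0) -sumr_const; apply: eq_bigr => x hx.
by apply/f_equal/eqP; rewrite cos_eq.
Qed.

Lemma card_Hk : #|G| = (#|Hk G k| * #|Gk G k|)%N.
Proof.
have := @partition_sum nat (fun _ => 1%N).
rewrite !sumr_const /= -mulrnA => h.
have e1 : forall n, (1%N *+ n) = n by elim=> // n IH; rewrite mulrS IH.
by move: h; rewrite !e1.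
Qed.
End Cosets.
Arguments cos {G} k x.
Arguments in_cos {G k}. Arguments Gk0 {G k}. Arguments GkB {G k}.
Arguments cos_eq {G k}. Arguments card_cos {G k}. Arguments partition_sum {G k L}.
Arguments e_eqZ {R a b}.

Section Gauss.
Variable R : realType.
Variable G : finZmodType.
Variable lam : G -> G -> rat.
Variable k : nat.
Hypothesis hlam : linking_pairing lam.
Hypothesis hk : (1 <= k)%N.
Hypothesis halt : bk_alternating lam k.

Local Notation e := (expi2pi R).
Local Notation Q := (Q lam k).
Local Notation B := (B lam k).

Lemma qk_cos (F : rat -> R[i]) (hF : forall a b, eqZ a b -> F a = F b) x :
  F (qk lam k (cos k x)) = F (Q x).
Proof.
rewrite /qk; case: pickP => [p hp|h] /=; last first.
  by have := h x; rewrite in_cos subrr Gk0.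
apply: hF; rewrite in_cos in hp.
have -> : p = x + (p - x) by rewrite addrC subrK.
exact: Q_coset.
Qed.

Lemma sum_Q (F : rat -> R[i]) (hF : forall a b, eqZ a b -> F a = F b) :
  \sum_(x : G) F (Q x) = (\sum_(C in Hk G k) F (qk lam k C)) *+ #|Gk G k|.
Proof.
rewrite -(partition_sum (fun C => F (qk lam k C))).
by apply: eq_bigr => x _; rewrite qk_cos.
Qed.

Lemma e0 : e 0 = 1. Proof. by have := @e_nat R 0. Qed.

Lemma char_sum z :
  \sum_(y : G) e (B y z) = if z \in Gk G k then #|G|%:R else 0.
Proof.
case: ifP => hz.
  rewrite (eq_bigr (fun _ => 1)); first by rewrite sumr_const.
  by move=> y _; rewrite -e0; apply: e_eqZ; rewrite subr0; apply: B_Gk.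
have [y0 hy0] := nonsing_B hlam _ (negbT hz).
set S := \sum_y _.
have hS : S = e (B y0 z) * S.
  rewrite {1}/S (reindex_inj (addrI y0)) /S mulr_sumr; apply: eq_bigr => y _.
  by rewrite -e_add; apply: e_eqZ; exact: (BD1 hlam).
have : (1 - e (B y0 z)) * S = 0 by rewrite mulrBl mul1r -hS subrr.
move/eqP; rewrite mulf_eq0 => /orP [/eqP h|/eqP ->] //.
move: hy0; have -> // : intQ (B y0 z).
by apply: (@e_eq1 R); apply/esym/eqP; rewrite -subr_eq0; apply/eqP.
Qed.

Lemma TT :
  (\sum_(x : G) e (Q x)) * (\sum_(y : G) e (- Q y)) = (#|G| * #|Gk G k|)%:R.
Proof.
rewrite big_distrlr /= exchange_big /=.
transitivity (\sum_(y : G) \sum_(z : G) e (Q z) * e (B y z)).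
  apply: eq_bigr => y _; rewrite (reindex_inj (addrI y)); apply: eq_bigr => z _.
  rewrite -!e_add; apply: e_eqZ.
  have := QD hlam hk y z; rewrite /eqZ; congr intQ; ring.
rewrite exchange_big /=.
transitivity (\sum_(z : G) (if z \in Gk G k then e (Q z) * #|G|%:R else 0)).
  apply: eq_bigr => z _; rewrite -mulr_sumr char_sum.
  by case: ifP; rewrite ?mulr0.
rewrite -big_mkcond /= (eq_bigr (fun _ => #|G|%:R)).
  by rewrite sumr_const -mulrnA.
move=> z hz; rewrite (_ : e (Q z) = 1) ?mul1r // -e0; apply: e_eqZ.
by rewrite subr0; apply: Q_Gk.
Qed.
End Gauss.
Arguments TT R {G lam k}. Arguments sum_Q R {G lam k}.
Lemma hensel7 m : exists d, odd d /\ (2 ^ (m + 3) %| d ^ 2 + 7)%N.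
Proof.
elim: m => [|m [d [hd hdv]]]; first by exists 1%N.
move: hdv => /dvdnP [t ht].
have hX : (2 ^ (m.+1 + 3) = 2 * 2 ^ (m + 3))%N by rewrite addSn expnS.
case ht2 : (odd t).
  exists (d + 4 * 2 ^ m)%N; split.
    by rewrite oddD hd oddM.
  apply/dvdnP; exists (t./2 + d./2 + 1 + 2 ^ m)%N.
  have et := odd_double_half t; have ed := odd_double_half d.
  rewrite ht2 hd /= in et ed.
  rewrite hX !expnD /=.
  move: ht; rewrite expnD /= => ht.
  rewrite -muln2 in et ed.
  set X := (2 ^ m)%N in ht *; set a := t./2 in et *; set b := d./2 in ed *.
  rewrite -ed -et in ht *; nia.
exists d; split => //.
have et := odd_double_half t; rewrite ht2 /= add0n -muln2 in et.
apply/dvdnP; exists t./2; rewrite ht hX -{1}et; ring.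
Qed.

Lemma hensel n : exists d, (2 ^ n %| d ^ 2 + 7)%N.
Proof.
have [d [_ h]] := hensel7 n; exists d; apply: dvdn_trans h.
by rewrite expnD dvdn_mulr.
Qed.

Lemma exponent (G : finZmodType) : is_2group G -> exists n, forall x : G, x *+ 2 ^ n = 0.
Proof.
move=> h.
have h' : forall x : G, exists n, x *+ 2 ^ n == 0.
  by move=> x; have [n hn] := h x; exists n; apply/eqP.
exists (\max_(x : G) xchoose (h' x))%N => x.
have hx := xchooseP (h' x); have hle := leq_bigmax (F := fun x => xchoose (h' x)) x.
rewrite -(subnK hle) expnD mulnC mulrnA (eqP hx) mul0rn //.
Qed.
Definition o0 : 'I_4 := @Ordinal 4 0 isT.
Definition o1 : 'I_4 := @Ordinal 4 1 isT.
Definition o2 : 'I_4 := @Ordinal 4 2 isT.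
Definition o3 : 'I_4 := @Ordinal 4 3 isT.

Lemma sum4 (L : zmodType) (F : 'I_4 -> L) : \sum_(i < 4) F i = F o0 + F o1 + F o2 + F o3.
Proof.
rewrite !big_ord_recr big_ord0 /= GRing.add0r.
by repeat f_equal; apply: val_inj.
Qed.

Definition Amat (dd : int) (i j : nat) : int :=
  match i, j with
  | 0, 0 => 1 | 0, 1 => -1 | 0, 2 => -2 | 0, 3 => - dd
  | 1, 0 => 1 | 1, 1 => 1 | 1, 2 => - dd | 1, 3 => 2
  | 2, 0 => 2 | 2, 1 => dd | 2, 2 => 1 | 2, 3 => -1
  | 3, 0 => dd | 3, 1 => -2 | 3, 2 => 1 | 3, 3 => 1
  | _, _ => 0 end.

Lemma coldot dd (l i : 'I_4) :
  \sum_(j < 4) Amat dd j l * Amat dd j i = if l == i then 6 + dd ^+ 2 else 0.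
Proof.
rewrite sum4.
case: l => [[|[|[|[|l]]]] hl] //; case: i => [[|[|[|[|i]]]] hi] //=;
  rewrite /eq_op /=; ring.
Qed.

Section Quat.
Variable G : finZmodType.
Variable lam : G -> G -> rat.
Variable k : nat.
Hypothesis hlam : linking_pairing lam.
Hypothesis hk : (1 <= k)%N.
Local Notation Q := (Q lam k).
Local Notation B := (B lam k).

Lemma QD3 a b c : eqZ (Q (a + b + c)) (Q a + Q b + Q c + B a b + B a c + B b c).
Proof.
apply: eqZ_trans (QD hlam hk _ _) _.
apply: eqZ_trans (eqZ_add (eqZ_add (QD hlam hk _ _) (eqZ_refl _)) (BD1 hlam _ _ _)) _.
by apply: eqZ_eq; ring.
Qed.

Lemma QD4 a b c d : eqZ (Q (a + b + c + d))
  (Q a + Q b + Q c + Q d + B a b + B a c + B a d + B b c + B b d + B c d).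
Proof.
apply: eqZ_trans (QD hlam hk _ _) _.
have h := eqZ_trans (BD1 hlam _ _ _) (eqZ_add (BD1 hlam a b d) (eqZ_refl (B c d))).
apply: eqZ_trans (eqZ_add (eqZ_add (QD3 _ _ _) (eqZ_refl _)) h) _.
by apply: eqZ_eq; ring.
Qed.

Lemma BMM x y (c c' : int) : eqZ (B (x *~ c) (y *~ c')) (c%:~R * c'%:~R * B x y).
Proof.
apply: eqZ_trans (BMz1 hlam _ _ _) _.
apply: eqZ_trans (eqZ_mulz _ (BMz2 hlam _ _ _)) _.
by apply: eqZ_eq; ring.
Qed.

Lemma Q4 x0 x1 x2 x3 (c0 c1 c2 c3 : int) :
  eqZ (Q (x0 *~ c0 + x1 *~ c1 + x2 *~ c2 + x3 *~ c3))
   ((c0%:~R)^+2 * Q x0 + (c1%:~R)^+2 * Q x1 + (c2%:~R)^+2 * Q x2 + (c3%:~R)^+2 * Q x3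
    + c0%:~R * c1%:~R * B x0 x1 + c0%:~R * c2%:~R * B x0 x2 + c0%:~R * c3%:~R * B x0 x3
    + c1%:~R * c2%:~R * B x1 x2 + c1%:~R * c3%:~R * B x1 x3 + c2%:~R * c3%:~R * B x2 x3).
Proof.
apply: eqZ_trans (QD4 _ _ _ _) _.
repeat apply: eqZ_add; (apply: (QMz hlam) || apply: BMM).
Qed.
End Quat.
Arguments Q4 {G lam k}. Arguments QD4 {G lam k}. Arguments QD3 {G lam k}. Arguments BMM {G lam k}.
Section Quat2.
Variable G : finZmodType.
Variable lam : G -> G -> rat.
Variable k : nat.
Hypothesis hlam : linking_pairing lam.
Hypothesis hk : (1 <= k)%N.
Variable n0 : nat.
Hypothesis hexp : forall x : G, x *+ 2 ^ n0 = 0.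
Variable d : nat.
Hypothesis hd : (2 ^ n0 %| d ^ 2 + 7)%N.
Local Notation Q := (Q lam k).
Local Notation dd := (Posz d).

Definition phi (f : {ffun 'I_4 -> G}) : {ffun 'I_4 -> G} :=
  [ffun i : 'I_4 => \sum_(j < 4) f j *~ Amat dd i j].
Definition psi (f : {ffun 'I_4 -> G}) : {ffun 'I_4 -> G} :=
  [ffun i : 'I_4 => \sum_(j < 4) f j *~ Amat dd j i].

Lemma quat f : eqZ (\sum_(i < 4) Q (phi f i)) ((6 + dd ^+ 2)%:~R * \sum_(i < 4) Q (f i)).
Proof.
rewrite !sum4 !ffunE !sum4 /=.
apply: eqZ_trans (eqZ_add (eqZ_add (eqZ_add (Q4 hlam hk _ _ _ _ _ _ _ _)
  (Q4 hlam hk _ _ _ _ _ _ _ _)) (Q4 hlam hk _ _ _ _ _ _ _ _)) (Q4 hlam hk _ _ _ _ _ _ _ _)) _.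
apply: eqZ_eq; rewrite ?mulrNz; ring.
Qed.

Lemma Q_exp x : intQ ((2 ^ n0)%:R * Q x).
Proof.
have h := eqZ_trans (eqZ_sym (lamMn hlam x x (2 ^ n0))) (eqZ_eq (congr1 (fun y => lam y x) (hexp x))).
have h2 := eqZ_trans h (lam0 hlam x).
have := intQM (intQ_nat (2 ^ k.-1)) (eqZ_0int h2).
by rewrite /Q /KK; congr intQ; ring.
Qed.

Lemma quatN f : eqZ (\sum_(i < 4) Q (phi f i)) (- \sum_(i < 4) Q (f i)).
Proof.
apply: eqZ_trans (quat f) _.
move: hd => /dvdnP [t ht].
rewrite /eqZ opprK.
set X := \sum_(i < 4) Q (f i).
have hX : \sum_(i < 4) (2 ^ n0)%:R * Q (f i) = (2 ^ n0)%:R * X by rewrite mulr_sumr.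
have e1 : ((d ^ 2 + 7)%N%:R : rat) = (t * 2 ^ n0)%N%:R by rewrite ht.
rewrite natrD natrX natrM in e1.
have -> : (6 + dd ^+ 2)%:~R * X + X = t%:R * \sum_(i < 4) ((2 ^ n0)%:R * Q (f i)).
  rewrite hX mulrA -e1 intrD rmorphXn /= -pmulrn; ring.
apply: intQM; first exact: intQ_nat.
rewrite /intQ; apply: rpred_sum => i _; exact: Q_exp.
Qed.

Lemma mulz_neg (x : G) : x *~ (6 + dd ^+ 2) = - x.
Proof.
move: hd => /dvdnP [t ht].
have h0 : x *~ (7 + dd ^+ 2) = 0.
  have -> : (7 + dd ^+ 2) = Posz (d ^ 2 + 7)%N by rewrite addrC PoszD expr2 -PoszM mulnn.
  by rewrite -pmulrn ht mulnC mulrnA hexp mul0rn.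
have -> : (6 + dd ^+ 2) = (7 + dd ^+ 2) - 1 by ring.
by rewrite mulrzBr h0 mulr1z sub0r.
Qed.

Lemma psi_phi f : psi (phi f) = [ffun i => - f i].
Proof.
apply/ffunP => i; rewrite !ffunE.
transitivity (\sum_(j < 4) \sum_(l < 4) f l *~ (Amat dd j l * Amat dd j i)).
  apply: eq_bigr => j _; rewrite ffunE mulrz_suml; apply: eq_bigr => l _.
  by rewrite mulrzA.
rewrite exchange_big /=.
transitivity (\sum_(l < 4) f l *~ (if l == i then 6 + dd ^+ 2 else 0)).
  by apply: eq_bigr => l _; rewrite -coldot mulrz_sumr.
rewrite (bigD1 i) //= eqxx big1 ?addr0 ?mulz_neg // => l /negbTE ->.
by rewrite mulr0z.
Qed.

Lemma phi_inj : injective phi.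
Proof.
move=> f g h; have := congr1 psi h; rewrite !psi_phi => /ffunP h2.
by apply/ffunP => i; have := h2 i; rewrite !ffunE => /oppr_inj.
Qed.
End Quat2.
Arguments phi_inj {G} n0 hexp d hd.
Arguments quatN {G lam k} hlam hk n0 hexp d hd.

Section T4sec.
Variable R : realType.
Local Notation e := (expi2pi R).

Lemma pow4_sum (G : finType) (F : G -> R[i]) :
  (\sum_x F x) ^+ 4 = \sum_(f : {ffun 'I_4 -> G}) \prod_(i < 4) F (f i).
Proof.
rewrite -[in LHS](card_ord 4) -prodr_const.
exact: (bigA_distr_bigA (fun (i : 'I_4) (x : G) => F x)).
Qed.

Lemma e_sum4 (a : 'I_4 -> rat) : e (\sum_(i < 4) a i) = \prod_(i < 4) e (a i).
Proof. exact: (big_morph e (@e_add R) (@e0 R)). Qed.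

Lemma T4 (G : finZmodType) (lam : G -> G -> rat) k :
  linking_pairing lam -> (1 <= k)%N -> is_2group G ->
  (\sum_(x : G) e (Q lam k x)) ^+ 4 = (\sum_(x : G) e (- Q lam k x)) ^+ 4.
Proof.
move=> hlam hk h2.
have [n0 hexp] := exponent _ h2.
have [d hd] := hensel n0.
rewrite !pow4_sum.
transitivity (\sum_(f : {ffun 'I_4 -> G}) e (\sum_(i < 4) Q lam k (f i))).
  by apply: eq_bigr => f _; rewrite e_sum4.
rewrite (reindex_inj (phi_inj n0 hexp d hd)).
apply: eq_bigr => f _.
rewrite (e_eqZ (quatN hlam hk n0 hexp d hd f)) -sumrN e_sum4.
by [].
Qed.
End T4sec.
Section Cplx.
Variable R : realType.
Local Notation e := (expi2pi R).

Lemma cM (a b : R) : (a%:C * b%:C)%C = ((a * b)%:C)%C.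
Proof. rewrite /= cmulE; congr Complex; ring. Qed.
Lemma cD (a b : R) : (a%:C + b%:C)%C = ((a + b)%:C)%C.
Proof. by rewrite /= /GRing.add /=; congr Complex; rewrite addr0. Qed.
Lemma cnat n : ((n%:R : R)%:C)%C = n%:R.
Proof.
elim: n => [|n IH]; first by [].
by rewrite mulrS -cD IH -mulrS.
Qed.
Lemma cpow (a : R) n : ((a%:C)%C) ^+ n = ((a ^+ n)%:C)%C.
Proof.
elim: n => [|n IH]; first by rewrite !expr0.
by rewrite !exprS IH cM.
Qed.
Lemma e_pow a n : e a ^+ n = e (a * n%:R).
Proof.
elim: n => [|n IH]; first by rewrite expr0 mulr0 e0.
by rewrite exprS IH -e_add mulrS; congr e; ring.
Qed.
Lemma e_inj8 (i j : 'I_8) : e (i%:R / 8) = e (j%:R / 8) -> i = j.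
Proof.
move=> h.
have : e (i%:R / 8 - j%:R / 8) = 1.
  by rewrite e_add h -e_add subrr e0.
move/e_eq1 => /intrP [n hn].
have h8 : (i%:R - j%:R : rat) = 8 * n%:~R by rewrite -hn; field.
have : (Posz i - Posz j) = 8 * n.
  apply: (@intr_inj rat); rewrite intrD intrN intrM h8.
  by [].
move: (ltn_ord i) (ltn_ord j) => hi hj hz.
apply: val_inj => /=; lia.
Qed.
End Cplx.
Section Roots.
Variable R : realType.
Local Notation e := (expi2pi R).

Definition r8 (j : 'I_8) : R[i] := e (j%:R / 8).
Lemma roots8 (z : R[i]) : z ^+ 8 = 1 -> exists j : 'I_8, z = e (j%:R / 8).
Proof.
move=> hz.
case: (pickP (fun j : 'I_8 => z == e (j%:R / 8))) => [j /eqP hj|hn].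
  by exists j.
have hu : uniq (z :: map r8 (enum 'I_8)).
  rewrite /= map_inj_uniq ?enum_uniq ?andbT; last first.
    by move=> i j; apply: e_inj8.
  apply/mapP => -[j _ hj]; by move: (hn j); rewrite /= hj eqxx.
have ha : all 8.-unity_root (z :: map r8 (enum 'I_8)).
  rewrite /= (unity_rootE) hz eqxx /=; apply/allP => w /mapP [j _ ->]; rewrite /r8.
  by rewrite unity_rootE e_pow mulfVK // e_nat.
have := max_unity_roots (isT : (0 < 8)%N) ha hu.
by rewrite /= size_map size_enum_ord.
Qed.
End Roots.
Section Gam.
Variable R : realType.
Variable G : finZmodType.
Variable lam : G -> G -> rat.
Variable k : nat.
Hypothesis hlam : linking_pairing lam.
Hypothesis hk : (1 <= k)%N.
Hypothesis halt : bk_alternating lam k.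
Local Notation e := (expi2pi R).
Local Notation Q := (Q lam k).

Definition SS (s : bool) : R[i] :=
  \sum_(C in Hk G k) e (if s then qk lam k C else - qk lam k C).

Lemma g_gt0 : (0 < #|Gk G k|)%N.
Proof. by apply/card_gt0P; exists 0; apply: Gk0. Qed.
Lemma h_gt0 : (0 < #|Hk G k|)%N.
Proof. by apply/card_gt0P; exists (cos k 0); rewrite Hk_cos imset_f ?in_setT. Qed.

Lemma LT s : \sum_(x : G) e (if s then Q x else - Q x) = SS s *+ #|Gk G k|.
Proof.
have := sum_Q R hlam hk halt (fun a => e (if s then a else - a)) _.
apply => a b hab; apply: e_eqZ; case: s => //; exact: eqZ_opp.
Qed.

Lemma natC_neq0 n : (0 < n)%N -> (n%:R : R[i]) != 0.
Proof. by rewrite pnatr_eq0 -lt0n. Qed.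

Lemma SS_mul : SS true * SS false = #|Hk G k|%:R.
Proof.
have := TT R hlam hk halt.
rewrite (LT true) (LT false) (card_Hk G k) -[SS true *+ _]mulr_natr -[SS false *+ _]mulr_natr.
rewrite mulrACA -natrM -mulnA => H.
have hg : ((#|Gk G k| * #|Gk G k|)%:R : R[i]) != 0 by rewrite natC_neq0 // muln_gt0 g_gt0.
by apply: (mulIf hg); rewrite H natrM.
Qed.

Hypothesis h2 : is_2group G.

Lemma SS4 : SS true ^+ 4 = SS false ^+ 4.
Proof.
have := T4 R G lam k hlam hk h2.
have := LT true; have := LT false; rewrite /= => -> ->.
rewrite -[SS true *+ _]mulr_natr -[SS false *+ _]mulr_natr !exprMn => /mulIf; apply.
by rewrite expf_neq0 // natC_neq0 // g_gt0.
Qed.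

Lemma gamma8 : gammak R lam k ^+ 8 = 1.
Proof.
rewrite /gammak -/(SS true) exprMn cpow.
have -> : SS true ^+ 8 = (#|Hk G k|%:R) ^+ 4.
  by rewrite -SS_mul exprMn -SS4 -exprD.
rewrite -cnat cpow cM.
set hR := (#|Hk G k|%:R : R).
have hpos : 0 < hR by rewrite ltr0n h_gt0.
set s := Num.sqrt hR.
have hs2 : s ^+ 2 = hR by rewrite sqr_sqrtr // ltW.
have hs0 : s != 0 by rewrite sqrtr_eq0 -ltNge.
have -> : s^-1 ^+ 8 * hR ^+ 4 = 1 by rewrite -hs2; field.
by [].
Qed.

Lemma uk_spec : gammak R lam k = expi2pi R ((val (uk R lam k))%:R / 8).
Proof.
have [j hj] := @roots8 R _ gamma8.
rewrite /uk; case: pickP => [u /eqP -> //|hn].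
by move: (hn j); rewrite /= hj eqxx.
Qed.
End Gam.

Section Sum.
Variables G G' : finZmodType.
Variable lam : G -> G -> rat.
Variable lam' : G' -> G' -> rat.
Variable k : nat.
Hypothesis hk : (1 <= k)%N.
Hypothesis hlam : linking_pairing lam.
Hypothesis hlam' : linking_pairing lam'.
Hypothesis halt : bk_alternating lam k.
Hypothesis halt' : bk_alternating lam' k.

Local Notation GS := (prodZ G G').
Local Notation lamS := (osum lam lam').

Lemma fst_mulrn (p : GS) n : (p *+ n).1 = p.1 *+ n.
Proof. by elim: n => [|n IH] //; rewrite !mulrS /= IH. Qed.
Lemma snd_mulrn (p : GS) n : (p *+ n).2 = p.2 *+ n.
Proof. by elim: n => [|n IH] //; rewrite !mulrS /= IH. Qed.

Lemma inGkS (p : GS) : (p \in Gk GS k) = (p.1 \in Gk G k) && (p.2 \in Gk G' k).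
Proof.
rewrite !inE; case: p => a b /=.
rewrite -[(a, b) *+ _]/(((a, b) : GS) *+ _).
apply/eqP/andP => [h|[/eqP h1 /eqP h2]].
  by split; apply/eqP; [have := congr1 fst h | have := congr1 snd h];
    rewrite ?fst_mulrn ?snd_mulrn.
have := fst_mulrn (a, b) (2 ^ k); have := snd_mulrn (a, b) (2 ^ k).
case: (((a, b) : GS) *+ 2 ^ k) => c d /= -> ->.
by rewrite h1 h2.
Qed.

Lemma altS : bk_alternating lamS k.
Proof.
move=> p; rewrite inGkS => /andP [h1 h2].
have := intQD (halt _ h1) (halt' _ h2); rewrite /bk /osum; congr intQ; ring.
Qed.

Lemma linkS : linking_pairing lamS.
Proof.
case: hlam => b1 s1 n1; case: hlam' => b2 s2 n2.
split.
- move=> x y z; have := intQD (b1 x.1 y.1 z.1) (b2 x.2 y.2 z.2).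
  by rewrite /osum; congr intQ; rewrite /=; ring.
- move=> x y; have := intQD (s1 x.1 y.1) (s2 x.2 y.2).
  by rewrite /osum; congr intQ; ring.
- case=> a b h.
  have ha : a = 0.
    apply: n1 => y; have := h ((y, 0) : GS); rewrite /osum /= => hy.
    have := intQB hy (eqZ_0int (lam02 hlam' b)); congr intQ; ring.
  have hb : b = 0.
    apply: n2 => y; have := h ((0, y) : GS); rewrite /osum /= => hy.
    have := intQB hy (eqZ_0int (lam02 hlam a)); congr intQ; ring.
  by rewrite ha hb.
Qed.

Lemma cardGkS : #|Gk GS k| = (#|Gk G k| * #|Gk G' k|)%N.
Proof. by rewrite -cardsX; apply: eq_card => p; rewrite inGkS !inE. Qed.

Lemma cardHkS : #|Hk GS k| = (#|Hk G k| * #|Hk G' k|)%N.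
Proof.
have h1 := card_Hk GS k; have h2 := card_Hk G k; have h3 := card_Hk G' k.
rewrite card_prod h2 h3 cardGkS in h1.
apply/eqP; rewrite -(@eqn_pmul2r (#|Gk G k| * #|Gk G' k|)); last first.
  by rewrite muln_gt0 !g_gt0.
by rewrite -h1; apply/eqP; ring.
Qed.

Variable R : realType.
Local Notation e := (expi2pi R).

Lemma TS (s : bool) :
  \sum_(p : GS) e (if s then Q lamS k p else - Q lamS k p) =
  (\sum_(x : G) e (if s then Q lam k x else - Q lam k x)) *
  (\sum_(y : G') e (if s then Q lam' k y else - Q lam' k y)).
Proof.
rewrite big_distrlr pair_bigA; apply: eq_bigr => p _.
rewrite /= -e_add; congr e; rewrite /Q /osum; case: s; ring.
Qed.

Lemma gammak_SS (H : finZmodType) (mu : H -> H -> rat) :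
  gammak R mu k = ((Num.sqrt (#|Hk H k|%:R : R))^-1)%:C%C * SS R H mu k true.
Proof. by []. Qed.

Lemma gammaS : gammak R lamS k = gammak R lam k * gammak R lam' k.
Proof.
have hS : SS R GS lamS k true = SS R G lam k true * SS R G' lam' k true.
  have := TS true.
  rewrite (LT R GS lamS k linkS hk altS true) (LT R G lam k hlam hk halt true).
  rewrite (LT R G' lam' k hlam' hk halt' true) cardGkS.
  rewrite -[SS R GS lamS k true *+ _]mulr_natr -[SS R G lam k true *+ _]mulr_natr.
  rewrite -[SS R G' lam' k true *+ _]mulr_natr mulrACA -natrM => H.
  have hg : ((#|Gk G k| * #|Gk G' k|)%:R : R[i]) != 0.
    by rewrite natC_neq0 // muln_gt0 !g_gt0.
  exact: (mulIf hg).
rewrite !gammak_SS hS cardHkS natrM sqrtrM ?ler0n // invfM -cM; ring.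
Qed.
End Sum.

Lemma e_mod8 (R : realType) (u v : 'Z_8) :
  expi2pi R ((val u)%:R / 8) * expi2pi R ((val v)%:R / 8) = expi2pi R ((val (u + v))%:R / 8).
Proof.
rewrite -e_add; apply: e_eqZ => /=.
have E : (Zp_trunc 8).+2 = 8%N by [].
rewrite [X in (_ %% X)%N]E.
have hd := divn_eq (u + v) 8.
have -> : (u : nat)%:R / 8 + (v : nat)%:R / 8 - ((u + v) %% 8)%:R / 8 = ((u + v) %/ 8)%:R :> rat.
  have : ((u + v)%N%:R : rat) = ((u + v) %/ 8 * 8 + (u + v) %% 8)%N%:R by rewrite -hd.
  rewrite !natrD natrM -mulrDl => ->; field; done.
exact: intQ_nat.
Qed.

Theorem lemma5p15 (R : realType) (k : nat) (G G' : finZmodType)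
  (lam : G -> G -> rat) (lam' : G' -> G' -> rat) :
  (1 <= k)%N ->
  is_2group G -> is_2group G' ->
  linking_pairing lam -> linking_pairing lam' ->
  bk_alternating lam k -> bk_alternating lam' k ->
  bk_alternating (osum lam lam') k /\
  uk R (osum lam lam') k = uk R lam k + uk R lam' k.
Proof.
move=> hk h2 h2' hlam hlam' halt halt'.
split; first exact: altS.
have g1 := uk_spec R G lam k hlam hk halt h2.
have g2 := uk_spec R G' lam' k hlam' hk halt' h2'.
have gs := @gammaS _ _ _ _ _ hk hlam hlam' halt halt' R.
rewrite g1 g2 e_mod8 in gs.
rewrite {1}/uk; case: pickP => [w /eqP hw|hn]; last first.
  by move: (hn (uk R lam k + uk R lam' k)); rewrite /= gs eqxx.
by apply: e_inj8; exact: (etrans (esym hw) gs).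
Qed.
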